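(* Let $D$ be any digraph and $P$ an admissible partition of $V(D)$. Then the map $\hat\varphi_P\colon|D|\to D/P$ is continuous.
   Context: Digraphs have no loops and no parallel edges. $\mathcal{X}(D)$: finite subsets of $V(D)$. A vertex set $Y$ separates vertex sets $A,B$ if every $A$–$B$ path meets $Y$ or every $B$–$A$ path meets $Y$. A finite partition $P$ of $V(D)$ is admissible if any two distinct classes are separated by a finite vertex set. $D/P$ is the finite multi-digraph on vertex set $P$ where for distinct $p_1,p_2\in P$ there is one edge $(e,p_1,p_2)$ for each edge $e$ of $D$ from $p_1$ to $p_2$ if there are finitely many such edges, and a single quotient edge $(p_1p_2,p_1,p_2)$ if there are infinitely many; $D/P$ carries the 1-complex topology (edges are copies of $[0,1]$ glued at endvertices; basic open sets are open stars around vertices and open subintervals of edges). Ends and limit edges: a ray is a one-way infinite directed path, its tails are its subrays; a ray is solid if for every $X\in\mathcal{X}(D)$ it has a tail in a strong component of $D-X$; solid rays are equivalent if for every $X$ they have tails in the same strong component of $D-X$; classes are ends, $\Omega(D)$. $C(X,\omega)$ is the strong component of $D-X$ containing tails of rays of $\omega$ ($\omega$ lives in it); $X$ separates ends $\omega,\eta$ if $C(X,\omega)\ne C(X,\eta)$. For distinct ends, $(\omega,\eta)$ is a limit edge if for every $X$ separating them $D$ has an edge from $C(X,\omega)$ to $C(X,\eta)$; for a vertex $v$, $(v,\omega)$ (resp. $(\omega,v)$) is a limit edge if $D$ has an edge from $v$ to $C(X,\omega)$ (resp. from $C(X,\omega)$ to $v$) for all $X$ with $v\notin C(X,\omega)$.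 $\Lambda(D)$: the limit edges. $|D|$: from $V(D)\cup\Omega(D)$ and copies $[0,1]_e$, $e\in E(D)\cup\Lambda(D)$, identify tail of $e$ with $0$ and head with $1$; points on different edges correspond if they come from the same real. A limit edge lives in a strong component $C$ of $D-X$ if each endpoint is a vertex of or an end living in $C$. Topology generated by: (1) open $\varepsilon$-stars around vertices $v$ ($[0,\varepsilon)$ of edges in $E(D)\cup\Lambda(D)$ with tail $v$, $(1-\varepsilon,1]$ of those with head $v$); (2) open subintervals of interiors of edges of $D$; (3) for an end $\omega$ and $X\in\mathcal{X}(D)$, $\hat C_\varepsilon(X,\omega)$: vertices and inner points of edges of $C(X,\omega)$, ends living in $C(X,\omega)$, points of limit edges living in $C(X,\omega)$, and for each edge of $E(D)\cup\Lambda(D)$ with exactly one endpoint $y$ a vertex of/end living in $C(X,\omega)$, the half-open segment of length $\varepsilon$ at $y$; (4) for an inner point $z$ of a limit edge $(\omega,\eta)$ and $X$ separating $\omega,\eta$: union of open $\varepsilon$-intervals around points corresponding to $z$ on all edges of $D$ from $C(X,\omega)$ to $C(X,\eta)$ and on limit edges with tail a vertex of/end living in $C(X,\omega)$ and head a vertex of/end living in $C(X,\eta)$; for $(v,\omega)$ with $v\in X$, analogously over edges of $D$ from $v$ to $C(X,\omega)$ and limit edges $(v,\omega')$ with $\omega'$ living in $C(X,\omega)$; symmetrically for $(\omega,v)$. $\hat\varphi_P\colon|D|\to D/P$: a vertex $v$ goes to its class; an inner point $z$ of an edge $vw$ of $D$ goes to the class of $v$ if $v,w$ lie in the same class, else to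 the corresponding point of the edge of $D/P$ from the class of $v$ to the class of $w$ (the copy of $vw$ or the quotient edge); an end $\omega$ goes to the unique class containing tails of all rays of $\omega$; an inner point $z$ of a limit edge $\lambda$ goes to the common image of the endpoints of $\lambda$ if these coincide, and otherwise (then $D$ has infinitely many edges between the two classes in the direction of $\lambda$, so $D/P$ has a quotient edge between them) to the corresponding point of that quotient edge. *)

(* Defs.v *)
From Stdlib Require Import Reals List Relations.
Import ListNotations.
Open Scope R_scope.



Definition gen_open {T : Type} (B : (T -> Prop) -> Prop) (U : T -> Prop) : Prop :=
  forall x, U x ->
    exists l : list (T -> Prop),
      Forall B l /\ Forall (fun S => S x) l /\
      (forall y, Forall (fun S => S y) l -> U y).

Definition continuous_wrt {T1 T2 : Type} (B1 : (T1 -> Prop) -> Prop)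
  (B2 : (T2 -> Prop) -> Prop) (f : T1 -> T2) : Prop :=
  forall U, gen_open B2 U -> gen_open B1 (fun x => U (f x)).

Section Digraph.
Context {V : Type} (adj : V -> V -> Prop).

(* finite vertex sets are lists *)
Definition reach_avoid (X : list V) : V -> V -> Prop :=
  clos_refl_trans V (fun a b => adj a b /\ ~ In a X /\ ~ In b X).

Definition sc (X : list V) (u v : V) : Prop :=
  ~ In u X /\ ~ In v X /\ reach_avoid X u v /\ reach_avoid X v u.

Definition is_ray (r : nat -> V) : Prop :=
  (forall m n, r m = r n -> m = n) /\ (forall n, adj (r n) (r (S n))).

Definition has_tail_in (r : nat -> V) (C : V -> Prop) : Prop :=
  exists N, forall n, (N <= n)%nat -> C (r n).

Definition solid (r : nat -> V) : Prop :=
  is_ray r /\ forall X : list V, exists u, ~ In u X /\ has_tail_in r (sc X u).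

Definition ray_equiv (r1 r2 : nat -> V) : Prop :=
  forall X : list V, exists u, ~ In u X /\
    has_tail_in r1 (sc X u) /\ has_tail_in r2 (sc X u).

(* an end = an equivalence class of solid rays *)
Definition is_end (w : (nat -> V) -> Prop) : Prop :=
  exists r, solid r /\ forall r', w r' <-> (solid r' /\ ray_equiv r r').

Definition DEnd : Type := { w : (nat -> V) -> Prop | is_end w }.

(* v is a vertex of C(X, w) *)
Definition compE (X : list V) (w : DEnd) (v : V) : Prop :=
  exists r, proj1_sig w r /\ has_tail_in r (fun x => sc X x v).

Definition same_comp (X : list V) (w1 w2 : DEnd) : Prop :=
  forall v, compE X w1 v <-> compE X w2 v.

Definition separates_ends (X : list V) (w h : DEnd) : Prop :=
  ~ same_comp X w h.

Definition limEE (w h : DEnd) : Prop :=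
  w <> h /\ forall X, separates_ends X w h ->
    exists u v, adj u v /\ compE X w u /\ compE X h v.
Definition limVE (v : V) (w : DEnd) : Prop :=
  forall X, ~ compE X w v -> exists u, adj v u /\ compE X w u.
Definition limEV (w : DEnd) (v : V) : Prop :=
  forall X, ~ compE X w v -> exists u, adj u v /\ compE X w u.

Inductive Node : Type := NV (v : V) | NE (w : DEnd).

Definition is_edge (a b : Node) : Prop :=
  match a, b with
  | NV u, NV v => adj u v
  | NE w, NE h => limEE w h
  | NV v, NE w => limVE v w
  | NE w, NV v => limEV w v
  end.

(* raw points of |D|: nodes, and inner points (a,b,t) of edges, 0<t<1 *)
Inductive RawPt : Type := PNode (n : Node) | PInner (a b : Node) (t : R).

Definition validPt (p : RawPt) : Prop :=
  match p with
  | PNode _ => True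
  | PInner a b t => is_edge a b /\ 0 < t < 1
  end.

Definition DPt : Type := { p : RawPt | validPt p }.

Definition node_in (X : list V) (w : DEnd) (n : Node) : Prop :=
  match n with
  | NV v => compE X w v
  | NE w' => same_comp X w' w
  end.

(* (1) open eps-stars around vertices *)
Definition star (v : V) (eps : R) (p : RawPt) : Prop :=
  p = PNode (NV v) \/
  exists a b t, p = PInner a b t /\
    ((a = NV v /\ t < eps) \/ (b = NV v /\ 1 - eps < t)).

(* (2) open subintervals of interiors of edges of D *)
Definition dinterval (u v : V) (lo hi : R) (p : RawPt) : Prop :=
  exists t, p = PInner (NV u) (NV v) t /\ lo < t < hi.

(* (3) \hat C_eps(X, w) *)
Definition Chat (X : list V) (w : DEnd) (eps : R) (p : RawPt) : Prop :=
  (exists n, p = PNode n /\ node_in X w n) \/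
  exists a b t, p = PInner a b t /\
    ((node_in X w a /\ node_in X w b) \/
     (node_in X w a /\ ~ node_in X w b /\ t < eps) \/
     (~ node_in X w a /\ node_in X w b /\ 1 - eps < t)).

(* (4) neighbourhoods of inner points of limit edges *)
Definition nbhdEE (X : list V) (w h : DEnd) (t0 eps : R) (p : RawPt) : Prop :=
  exists a b t, p = PInner a b t /\ node_in X w a /\ node_in X h b /\
    Rabs (t - t0) < eps.
Definition nbhdVE (X : list V) (v : V) (w : DEnd) (t0 eps : R) (p : RawPt) : Prop :=
  exists b t, p = PInner (NV v) b t /\ node_in X w b /\ Rabs (t - t0) < eps.
Definition nbhdEV (X : list V) (w : DEnd) (v : V) (t0 eps : R) (p : RawPt) : Prop :=
  exists a t, p = PInner a (NV v) t /\ node_in X w a /\ Rabs (t - t0) < eps.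

Definition basicRaw (S : RawPt -> Prop) : Prop :=
  (exists v eps, 0 < eps /\ forall p, S p <-> star v eps p) \/
  (exists u v lo hi, adj u v /\ 0 <= lo /\ lo < hi /\ hi <= 1 /\
      forall p, S p <-> dinterval u v lo hi p) \/
  (exists X w eps, 0 < eps /\ forall p, S p <-> Chat X w eps p) \/
  (exists X w h t0 eps, limEE w h /\ separates_ends X w h /\ 0 < t0 < 1 /\
      0 < eps /\ forall p, S p <-> nbhdEE X w h t0 eps p) \/
  (exists X v w t0 eps, limVE v w /\ In v X /\ 0 < t0 < 1 /\
      0 < eps /\ forall p, S p <-> nbhdVE X v w t0 eps p) \/
  (exists X w v t0 eps, limEV w v /\ In v X /\ 0 < t0 < 1 /\
      0 < eps /\ forall p, S p <-> nbhdEV X w v t0 eps p).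

Definition basicD (S : DPt -> Prop) : Prop :=
  exists S0, basicRaw S0 /\ forall p, S p <-> S0 (proj1_sig p).

Fixpoint chain (l : list V) : Prop :=
  match l with
  | x :: ((y :: _) as t) => adj x y /\ chain t
  | _ => True
  end.

Definition dpath (p : list V) : Prop := p <> [] /\ NoDup p /\ chain p.

Definition all_paths_meet (Y : list V) (A B : V -> Prop) : Prop :=
  forall p a b, dpath p -> hd_error p = Some a -> hd_error (rev p) = Some b ->
    A a -> B b -> exists y, In y p /\ In y Y.

Definition separates_sets (Y : list V) (A B : V -> Prop) : Prop :=
  all_paths_meet Y A B \/ all_paths_meet Y B A.

(* A finite partition P of V(D) is given by a finite index type K and a
   surjective labelling cls : V -> K; the classes are the fibres. *)
Context {K : Type} (cls : V -> K).

Definition finite_partition : Prop :=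
  (exists l : list K, forall k, In k l) /\ (forall k, exists v, cls v = k).

Definition admissible : Prop :=
  finite_partition /\
  forall k1 k2, k1 <> k2 ->
    exists X : list V, separates_sets X (fun v => cls v = k1) (fun v => cls v = k2).

Definition fin_between (k1 k2 : K) : Prop :=
  exists l : list (V * V), forall u v, adj u v -> cls u = k1 -> cls v = k2 ->
    In (u, v) l.

(* edges of D/P: copies of edges of D, or quotient edges *)
Inductive QEdge : Type := QCopy (u v : V) | QQuot (k1 k2 : K).

Definition qtail (e : QEdge) : K :=
  match e with QCopy u _ => cls u | QQuot k1 _ => k1 end.
Definition qhead (e : QEdge) : K :=
  match e with QCopy _ v => cls v | QQuot _ k2 => k2 end.

Definition qvalid_edge (e : QEdge) : Prop :=
  match e with
  | QCopy u v => adj u v /\ cls u <> cls v /\ fin_between (cls u) (cls v)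
  | QQuot k1 k2 => k1 <> k2 /\ ~ fin_between k1 k2
  end.

Inductive RawQ : Type := QNode (k : K) | QInner (e : QEdge) (t : R).

Definition validQ (q : RawQ) : Prop :=
  match q with
  | QNode _ => True
  | QInner e t => qvalid_edge e /\ 0 < t < 1
  end.

Definition QPt : Type := { q : RawQ | validQ q }.

Definition qstar (k : K) (eps : R) (q : RawQ) : Prop :=
  q = QNode k \/
  exists e t, q = QInner e t /\
    ((qtail e = k /\ t < eps) \/ (qhead e = k /\ 1 - eps < t)).

Definition qinterval (e : QEdge) (lo hi : R) (q : RawQ) : Prop :=
  exists t, q = QInner e t /\ lo < t < hi.

Definition basicQRaw (S : RawQ -> Prop) : Prop :=
  (exists k eps, 0 < eps /\ forall q, S q <-> qstar k eps q) \/
  (exists e lo hi, qvalid_edge e /\ 0 <= lo /\ lo < hi /\ hi <= 1 /\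
      forall q, S q <-> qinterval e lo hi q).

Definition basicQ (S : QPt -> Prop) : Prop :=
  exists S0, basicQRaw S0 /\ forall q, S q <-> S0 (proj1_sig q).

Definition node_class (n : Node) (k : K) : Prop :=
  match n with
  | NV v => cls v = k
  | NE w => forall r, proj1_sig w r -> has_tail_in r (fun x => cls x = k)
  end.

Definition phi_rel (p : RawPt) (q : RawQ) : Prop :=
  match p with
  | PNode n => exists k, node_class n k /\ q = QNode k
  | PInner a b t =>
      (exists u v, a = NV u /\ b = NV v /\
        ((cls u = cls v /\ q = QNode (cls u)) \/
         (cls u <> cls v /\ fin_between (cls u) (cls v) /\ q = QInner (QCopy u v) t) \/
         (cls u <> cls v /\ ~ fin_between (cls u) (cls v) /\
            q = QInner (QQuot (cls u) (cls v)) t)))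
      \/
      ((forall u v, ~ (a = NV u /\ b = NV v)) /\
       exists ka kb, node_class a ka /\ node_class b kb /\
         ((ka = kb /\ q = QNode ka) \/ (ka <> kb /\ q = QInner (QQuot ka kb) t)))
  end.

Definition is_phi (f : DPt -> QPt) : Prop :=
  forall p, phi_rel (proj1_sig p) (proj1_sig (f p)).

End Digraph.

(* Main.v *)
Require Import Defs.
From Stdlib Require Import Reals List Relations Classical ClassicalEpsilon Lia Lra.
Import ListNotations.
Open Scope R_scope.

Section S.
Context {V : Type} (adj : V -> V -> Prop) {K : Type} (cls : V -> K).

Lemma sc_sym X u v : sc adj X u v -> sc adj X v u.
Proof. unfold sc; tauto. Qed.

Lemma sc_trans X u v w : sc adj X u v -> sc adj X v w -> sc adj X u w.
Proof.
  unfold sc, reach_avoid; intros (H1&H2&H3&H4) (G1&G2&G3&G4).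
  repeat split; auto; eapply rt_trans; eauto.
Qed.

Fixpoint chainR (R0 : V -> V -> Prop) (l : list V) : Prop :=
  match l with
  | x :: ((y :: _) as t) => R0 x y /\ chainR R0 t
  | _ => True
  end.

Lemma chainR_tl R0 a t : chainR R0 (a :: t) -> chainR R0 t.
Proof. destruct t; simpl; tauto. Qed.

Lemma chainR_app_r R0 l1 l2 : chainR R0 (l1 ++ l2) -> chainR R0 l2.
Proof. induction l1; simpl; auto. intros H; apply IHl1; eapply chainR_tl; eauto. Qed.

Lemma chainR_adj R0 l : (forall a b, R0 a b -> adj a b) -> chainR R0 l -> chain adj l.
Proof.
  intros HR. induction l as [|a l IH]; simpl; auto.
  destruct l as [|b l]; auto. intros [H1 H2]; split; auto.
Qed.

Lemma hd_app {A} (l1 l2 : list A) : l1 <> [] -> hd_error (l1 ++ l2) = hd_error l1.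
Proof. destruct l1; simpl; congruence. Qed.

Lemma walk_path X x y :
  clos_refl_trans_1n V (fun a b => adj a b /\ ~ In a X /\ ~ In b X) x y -> ~ In y X ->
  exists p, hd_error p = Some x /\ hd_error (rev p) = Some y /\ NoDup p /\
    chainR (fun a b => adj a b /\ ~ In a X /\ ~ In b X) p /\ (forall z, In z p -> ~ In z X).
Proof.
  intros H Hy. induction H as [x|x z y Hxz Hzy IH].
  - exists [x]; simpl; repeat split; auto.
    + constructor; auto; constructor.
    + intros z [->|[]]; auto.
  - destruct (IH Hy) as [p (Hh & Hl & Hnd & Hc & Hn)].
    destruct (classic (In x p)) as [Hin|Hin].
    + destruct (in_split x p Hin) as [p1 [p2 ->]].
      exists (x :: p2); repeat split; auto.
      * rewrite rev_app_distr in Hl. rewrite hd_app in Hl; auto.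
        simpl. destruct (rev p2); simpl; discriminate.
      * eapply NoDup_app_remove_l; eauto.
      * eapply chainR_app_r; eauto.
      * intros w Hw; apply Hn; apply in_or_app; right; auto.
    + exists (x :: p); repeat split; auto.
      * simpl. rewrite hd_app; auto. intro E; rewrite E in Hl; discriminate.
      * constructor; auto.
      * destruct p as [|z' p]; simpl in Hh; [discriminate|]. injection Hh as ->.
        simpl; split; auto.
      * intros w [<-|Hw]; [tauto|auto].
Qed.

Lemma apm_mono Y Y' A B : (forall y, In y Y -> In y Y') ->
  all_paths_meet adj Y A B -> all_paths_meet adj Y' A B.
Proof.
  intros HY H p a b H1 H2 H3 H4 H5. destruct (H p a b H1 H2 H3 H4 H5) as [y [Hy1 Hy2]].
  exists y; auto.
Qed.

Lemma sep_mono Y Y' A B : (forall y, In y Y -> In y Y') ->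
  separates_sets adj Y A B -> separates_sets adj Y' A B.
Proof. intros HY [H|H]; [left|right]; eapply apm_mono; eauto. Qed.

Definition goodX (X0 : list V) := forall k1 k2, k1 <> k2 ->
  separates_sets adj X0 (fun v => cls v = k1) (fun v => cls v = k2).

Lemma X0_exists : admissible adj cls -> exists X0, goodX X0.
Proof.
  intros [[[lk Hlk] _] Hs].
  assert (H1 : forall k1 L, exists X, forall k2, In k2 L -> k1 <> k2 ->
     separates_sets adj X (fun v => cls v = k1) (fun v => cls v = k2)).
  { intros k1 L. induction L as [|k L [X HX]].
    - exists []; intros k2 [].
    - destruct (classic (k1 = k)) as [E|E].
      + exists X; intros k2 [<-|Hk] Hne; [congruence|auto].
      + destruct (Hs k1 k E) as [Y HY]. exists (X ++ Y).
        intros k2 [<-|Hk] Hne.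
        * eapply sep_mono; [|exact HY]. intros; apply in_or_app; auto.
        * eapply sep_mono; [|exact (HX k2 Hk Hne)]. intros; apply in_or_app; auto. }
  assert (H2 : forall L, exists X, forall k1, In k1 L -> forall k2, k1 <> k2 ->
     separates_sets adj X (fun v => cls v = k1) (fun v => cls v = k2)).
  { induction L as [|k L [X HX]].
    - exists []; intros k1 [].
    - destruct (H1 k lk) as [Y HY]. exists (X ++ Y).
      intros k1 [<-|Hk] k2 Hne.
      * eapply sep_mono; [|exact (HY k2 (Hlk k2) Hne)]. intros; apply in_or_app; auto.
      * eapply sep_mono; [|exact (HX k1 Hk k2 Hne)]. intros; apply in_or_app; auto. }
  destruct (H2 lk) as [X HX]. exists X. intros k1 k2 Hne. apply HX; auto.
Qed.

Section X0.
Variable X0 : list V.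
Hypothesis HX0 : goodX X0.

Lemma comp_class X x y : (forall z, In z X0 -> In z X) -> sc adj X x y -> cls x = cls y.
Proof.
  intros Hsub (Hx & Hy & Hxy & Hyx).
  destruct (classic (cls x = cls y)) as [E|E]; auto. exfalso.
  assert (Hp : forall a b, reach_avoid adj X a b -> ~ In b X -> exists p,
     dpath adj p /\ hd_error p = Some a /\ hd_error (rev p) = Some b /\ (forall z, In z p -> ~ In z X)).
  { intros a b Hab Hb. apply clos_rt_rt1n in Hab.
    destruct (walk_path X a b Hab Hb) as [p (H1&H2&H3&H4&H5)].
    exists p; repeat split; auto.
    - intro; subst; discriminate.
    - eapply chainR_adj; [|exact H4]. simpl; tauto. }
  destruct (HX0 (cls x) (cls y) E) as [H|H].
  - destruct (Hp x y Hxy Hy) as [p (Hd & H1 & H2 & H3)].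
    destruct (H p x y Hd H1 H2 eq_refl eq_refl) as [z [Hz1 Hz2]].
    apply (H3 z Hz1); auto.
  - destruct (Hp y x Hyx Hx) as [p (Hd & H1 & H2 & H3)].
    destruct (H p y x Hd H1 H2 eq_refl eq_refl) as [z [Hz1 Hz2]].
    apply (H3 z Hz1); auto.
Qed.


Lemma tail_both (r : nat -> V) (A B : V -> Prop) :
  has_tail_in r A -> has_tail_in r B -> has_tail_in r (fun x => A x /\ B x).
Proof.
  intros [N1 H1] [N2 H2]. exists (Nat.max N1 N2). intros n Hn; split;
  [apply H1|apply H2]; lia.
Qed.

Lemma tail_pick (r : nat -> V) (A : V -> Prop) : has_tail_in r A -> exists n, A (r n).
Proof. intros [N H]. exists N. apply H; lia. Qed.

Lemma tail_mono (r : nat -> V) (A B : V -> Prop) :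
  (forall x, A x -> B x) -> has_tail_in r A -> has_tail_in r B.
Proof. intros HAB [N H]; exists N; auto. Qed.

Lemma solid_refl r : solid adj r -> ray_equiv adj r r.
Proof. intros [_ Hs] X. destruct (Hs X) as [u [Hu Ht]]. exists u; auto. Qed.

Lemma end_ray (w : DEnd adj) : exists r, proj1_sig w r /\ solid adj r.
Proof.
  destruct w as [w [r [Hs Hw]]]. exists r; simpl; split; auto.
  apply Hw; split; auto; apply solid_refl; auto.
Qed.

Lemma comp_nonempty X (w : DEnd adj) : exists x, compE adj X w x.
Proof.
  destruct (end_ray w) as [r [Hr Hs]]. destruct (proj2 Hs X) as [u [Hu Ht]].
  exists u, r; split; auto. eapply tail_mono; [|exact Ht]. apply sc_sym.
Qed.

Lemma compE_notin X w u : compE adj X w u -> ~ In u X.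
Proof.
  intros [r [_ Ht]]. destruct (tail_pick _ _ Ht) as [n Hn]. apply sc_sym in Hn. apply Hn.
Qed.

Lemma end_class (w : DEnd adj) : exists k, node_class adj cls (NE adj w) k.
Proof.
  destruct w as [w [r0 [Hs Hw]]]. simpl.
  destruct (proj2 Hs X0) as [u0 [Hu0 Ht0]]. exists (cls u0).
  intros r Hr. apply Hw in Hr as [Hsr Heq]. destruct (Heq X0) as [u [Hu [T1 T2]]].
  destruct (tail_pick _ _ (tail_both _ _ _ Ht0 T1)) as [n [A B]].
  assert (E : cls u0 = cls u).
  { rewrite (comp_class X0 u0 (r0 n)); auto.
    symmetry; apply (comp_class X0 u (r0 n)); auto. }
  eapply tail_mono; [|exact T2]. intros x Hx. simpl.
  rewrite E. symmetry. apply (comp_class X0 u x); auto.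
Qed.

Lemma node_class_ex (n : Node adj) : exists k, node_class adj cls n k.
Proof. destruct n as [v|w]. - exists (cls v); reflexivity. - apply end_class. Qed.

Lemma class_uniq n k1 k2 : node_class adj cls n k1 -> node_class adj cls n k2 -> k1 = k2.
Proof.
  destruct n as [v|w]; simpl. - congruence.
  - intros H1 H2. destruct (end_ray w) as [r [Hr _]].
    destruct (tail_pick _ _ (tail_both _ _ _ (H1 r Hr) (H2 r Hr))) as [n [A B]]. congruence.
Qed.

Lemma compE_class X w k u : (forall z, In z X0 -> In z X) ->
  node_class adj cls (NE adj w) k -> compE adj X w u -> cls u = k.
Proof.
  intros Hsub Hk [r [Hr Ht]]. simpl in Hk.
  destruct (tail_pick _ _ (tail_both _ _ _ Ht (Hk r Hr))) as [n [A B]].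
  rewrite <- B. symmetry. eapply comp_class; eauto.
Qed.

Lemma node_in_class X w k n : (forall z, In z X0 -> In z X) ->
  node_class adj cls (NE adj w) k -> node_in adj X w n -> node_class adj cls n k.
Proof.
  intros Hsub Hk. destruct n as [u|w']; simpl.
  - eapply compE_class; eauto.
  - intros Hsc. destruct (comp_nonempty X w) as [x Hx].
    destruct (end_class w') as [k' Hk'].
    assert (cls x = k) by (eapply compE_class; eauto).
    assert (cls x = k') by (eapply compE_class; eauto; apply Hsc; auto).
    replace k with k' by congruence. exact Hk'.
Qed.

Lemma sep_diff X w h k1 k2 : (forall z, In z X0 -> In z X) ->
  node_class adj cls (NE adj w) k1 -> node_class adj cls (NE adj h) k2 -> k1 <> k2 ->
  separates_ends adj X w h.
Proof.
  intros Hsub H1 H2 Hne Hsc. destruct (comp_nonempty X w) as [x Hx].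
  apply Hne. rewrite <- (compE_class X w k1 x); auto.
  eapply compE_class; eauto. apply Hsc; auto.
Qed.

Lemma notfin_VE v w k2 : limVE adj v w -> node_class adj cls (NE adj w) k2 -> cls v <> k2 ->
  ~ fin_between adj cls (cls v) k2.
Proof.
  intros Hl Hk Hne [l Hfin].
  set (X := X0 ++ map snd l).
  assert (Hsub : forall z, In z X0 -> In z X) by (intros; apply in_or_app; auto).
  destruct (Hl X) as [u [Hvu Hu]].
  { intro C. apply Hne. eapply compE_class; eauto. }
  assert (cls u = k2) by (eapply compE_class; eauto).
  apply (compE_notin X w u Hu). apply in_or_app; right.
  apply (in_map snd l (v, u)). apply Hfin; auto.
Qed.

Lemma notfin_EV w v k1 : limEV adj w v -> node_class adj cls (NE adj w) k1 -> k1 <> cls v ->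
  ~ fin_between adj cls k1 (cls v).
Proof.
  intros Hl Hk Hne [l Hfin].
  set (X := X0 ++ map fst l).
  assert (Hsub : forall z, In z X0 -> In z X) by (intros; apply in_or_app; auto).
  destruct (Hl X) as [u [Huv Hu]].
  { intro C. apply Hne. symmetry; eapply compE_class; eauto. }
  assert (cls u = k1) by (eapply compE_class; eauto).
  apply (compE_notin X w u Hu). apply in_or_app; right.
  apply (in_map fst l (u, v)). apply Hfin; auto.
Qed.

Lemma notfin_EE w h k1 k2 : limEE adj w h -> node_class adj cls (NE adj w) k1 ->
  node_class adj cls (NE adj h) k2 -> k1 <> k2 -> ~ fin_between adj cls k1 k2.
Proof.
  intros [_ Hl] H1 H2 Hne [l Hfin].
  set (X := X0 ++ map fst l).
  assert (Hsub : forall z, In z X0 -> In z X) by (intros; apply in_or_app; auto).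
  destruct (Hl X (sep_diff X w h k1 k2 Hsub H1 H2 Hne)) as [u [v [Huv [Hu Hv]]]].
  assert (cls u = k1) by (eapply compE_class; eauto).
  assert (cls v = k2) by (eapply compE_class; eauto).
  apply (compE_notin X w u Hu). apply in_or_app; right.
  apply (in_map fst l (u, v)). apply Hfin; auto.
Qed.

Lemma notfin_gen a b ka kb : is_edge adj a b -> node_class adj cls a ka ->
  node_class adj cls b kb -> ka <> kb ->
  (forall u v, ~ (a = NV adj u /\ b = NV adj v)) -> ~ fin_between adj cls ka kb.
Proof.
  intros He Ha Hb Hne Hnv. destruct a as [u|w], b as [v|h]; simpl in He.
  - exfalso; eapply Hnv; eauto.
  - simpl in Ha; subst. eapply notfin_VE; eauto.
  - simpl in Hb; subst. eapply notfin_EV; eauto.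
  - eapply notfin_EE; eauto.
Qed.


Lemma phi_node n rq k : phi_rel adj cls (PNode adj n) rq -> node_class adj cls n k -> rq = QNode k.
Proof. simpl. intros [k' [H1 ->]] H2. f_equal. eapply class_uniq; eauto. Qed.

Lemma phi_same a b t rq k : phi_rel adj cls (PInner adj a b t) rq ->
  node_class adj cls a k -> node_class adj cls b k -> rq = QNode k.
Proof.
  simpl. intros [[u [v [-> [-> H]]]] | [_ [ka [kb [Ha [Hb H]]]]]] H1 H2; simpl in H1, H2.
  - destruct H as [[_ ->]|[[Hne _]|[Hne _]]]; congruence.
  - pose proof (class_uniq _ _ _ Ha H1). pose proof (class_uniq _ _ _ Hb H2). subst.
    destruct H as [[_ ->]|[Hne _]]; congruence.
Qed.

Lemma phi_diff a b t rq k1 k2 : phi_rel adj cls (PInner adj a b t) rq ->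
  node_class adj cls a k1 -> node_class adj cls b k2 -> k1 <> k2 ->
  ~ fin_between adj cls k1 k2 -> rq = QInner (QQuot k1 k2) t.
Proof.
  simpl. intros [[u [v [-> [-> H]]]] | [_ [ka [kb [Ha [Hb H]]]]]] H1 H2 Hne Hnf; simpl in H1, H2.
  - subst. destruct H as [[E _]|[[_ [F _]]|[_ [_ ->]]]]; tauto.
  - pose proof (class_uniq _ _ _ Ha H1). pose proof (class_uniq _ _ _ Hb H2). subst.
    destruct H as [[E _]|[_ ->]]; tauto.
Qed.

Lemma phi_copy u v t rq : phi_rel adj cls (PInner adj (NV adj u) (NV adj v) t) rq ->
  cls u <> cls v -> fin_between adj cls (cls u) (cls v) -> rq = QInner (QCopy u v) t.
Proof.
  simpl. intros [[u' [v' [E1 [E2 H]]]] | [Hn _]] Hne Hf.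
  - injection E1 as <-. injection E2 as <-.
    destruct H as [[E _]|[[_ [_ ->]]|[_ [F _]]]]; tauto.
  - exfalso; eapply Hn; eauto.
Qed.

Lemma phi_tail a b t rq k : phi_rel adj cls (PInner adj a b t) rq -> node_class adj cls a k ->
  rq = QNode k \/ exists e, rq = QInner e t /\ qtail cls e = k.
Proof.
  simpl. intros [[u [v [-> [-> H]]]] | [_ [ka [kb [Ha [Hb H]]]]]] H1; simpl in H1.
  - subst. destruct H as [[_ ->]|[[_ [_ ->]]|[_ [_ ->]]]]; [left; auto|right..];
    eexists; split; eauto; reflexivity.
  - pose proof (class_uniq _ _ _ Ha H1). subst.
    destruct H as [[_ ->]|[_ ->]]; [left; auto|right]; eexists; split; eauto; reflexivity.
Qed.

Lemma phi_head a b t rq k : phi_rel adj cls (PInner adj a b t) rq -> node_class adj cls b k ->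
  rq = QNode k \/ exists e, rq = QInner e t /\ qhead cls e = k.
Proof.
  simpl. intros [[u [v [-> [-> H]]]] | [_ [ka [kb [Ha [Hb H]]]]]] H1; simpl in H1.
  - subst. destruct H as [[E ->]|[[_ [_ ->]]|[_ [_ ->]]]]; [left; congruence|right..];
    eexists; split; eauto; reflexivity.
  - pose proof (class_uniq _ _ _ Hb H1). subst.
    destruct H as [[E ->]|[_ ->]]; [left; congruence|right]; eexists; split; eauto; reflexivity.
Qed.

Lemma qstar_tail (rq : @RawQ V K) k t eps :
  (rq = QNode k \/ exists e, rq = QInner e t /\ qtail cls e = k) -> t < eps -> qstar cls k eps rq.
Proof.
  intros [->|[e [-> He]]] Ht; [left; auto|right]. exists e, t; split; auto.
Qed.

Lemma qstar_head (rq : @RawQ V K) k t eps :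
  (rq = QNode k \/ exists e, rq = QInner e t /\ qhead cls e = k) -> 1 - eps < t -> qstar cls k eps rq.
Proof.
  intros [->|[e [-> He]]] Ht; [left; auto|right]. exists e, t; split; auto.
Qed.

Lemma Chat_maps w k eps : node_class adj cls (NE adj w) k ->
  forall ry rq, Chat adj X0 w eps ry -> phi_rel adj cls ry rq -> qstar cls k eps rq.
Proof.
  intros Hk ry rq [[n [-> Hn]] | [a [b [t [-> H]]]]] Hphi.
  - left. eapply phi_node; eauto. eapply node_in_class; eauto.
  - destruct H as [[Ha Hb]|[[Ha [_ Ht]]|[_ [Hb Ht]]]].
    + left. eapply phi_same; eauto; eapply node_in_class; eauto.
    + eapply qstar_tail; eauto. eapply phi_tail; eauto. eapply node_in_class; eauto.
    + eapply qstar_head; eauto. eapply phi_head; eauto. eapply node_in_class; eauto.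
Qed.


Definition goodN (rp : RawPt adj) (G : @RawQ V K -> Prop) :=
  exists N, basicRaw adj N /\ N rp /\
    forall ry rq, validPt adj ry -> N ry -> phi_rel adj cls ry rq -> G rq.

Lemma Rabs_self t e : 0 < e -> Rabs (t - t) < e.
Proof. intros; replace (t - t) with 0 by ring; rewrite Rabs_R0; auto. Qed.

Lemma same_comp_refl X w : same_comp adj X w w.
Proof. intro; tauto. Qed.

Lemma locRaw rp rq : validPt adj rp -> phi_rel adj cls rp rq ->
  (forall k eps, rq = QNode k -> 0 < eps -> goodN rp (qstar cls k eps)) /\
  (forall e t d, rq = QInner e t -> 0 < d ->
     goodN rp (fun q => exists t', q = QInner e t' /\ Rabs (t' - t) < d)).
Proof.
  intros Hv Hphi. destruct rp as [[v|w]|a b t].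
  - destruct Hphi as [k' [Hk ->]]. simpl in Hk. split; [|intros; discriminate].
    intros k eps Hq He. injection Hq as <-. subst.
    exists (star adj v eps); repeat split.
    + left; exists v, eps; split; auto; tauto.
    + left; auto.
    + intros ry rq _ [->|[a [b [t [-> [[-> Ht]|[-> Ht]]]]]]] Hp.
      * left. eapply phi_node; eauto. reflexivity.
      * eapply qstar_tail; eauto. eapply phi_tail; eauto. reflexivity.
      * eapply qstar_head; eauto. eapply phi_head; eauto. reflexivity.
  - destruct Hphi as [k' [Hk ->]]. split; [|intros; discriminate].
    intros k eps Hq He. injection Hq as <-.
    exists (Chat adj X0 w eps); repeat split.
    + right; right; left; exists X0, w, eps; split; auto; tauto.
    + left; exists (NE adj w); split; auto. apply same_comp_refl.
    + intros ry rq _ HN Hp. eapply Chat_maps; eauto.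
  - destruct Hv as [He [Ht0 Ht1]].
    destruct a as [u|w], b as [v|h]; simpl in He.
    +
      destruct (classic (cls u = cls v)) as [E|E].
      * assert (Hq : rq = QNode (cls u)) by (eapply phi_same; [eauto| reflexivity | simpl; congruence]).
        subst rq. split; [|intros; discriminate].
        intros k eps Hq Heps. injection Hq as <-.
        exists (dinterval adj u v 0 1); repeat split.
        -- right; left; exists u, v, 0, 1; repeat split; auto; try lra; tauto.
        -- exists t; split; auto.
        -- intros ry rq _ [t' [-> _]] Hp. left. eapply phi_same; eauto; simpl; congruence.
      * assert (Hgen : forall e, rq = QInner e t ->
           (forall t', forall rq', phi_rel adj cls (PInner adj (NV adj u) (NV adj v) t') rq' ->
              rq' = QInner e t') ->
           forall d, 0 < d -> goodN (PInner adj (NV adj u) (NV adj v) t)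
             (fun q => exists t', q = QInner e t' /\ Rabs (t' - t) < d)).
        { intros e Hq Hall d Hd.
          set (d' := Rmin d (Rmin t (1 - t))).
          assert (Hd1 : 0 < d') by (unfold d'; repeat apply Rmin_pos; lra).
          assert (Hd2 : d' <= d) by apply Rmin_l.
          assert (Hd3 : d' <= t) by (unfold d'; eapply Rle_trans; [apply Rmin_r|apply Rmin_l]).
          assert (Hd4 : d' <= 1 - t) by (unfold d'; eapply Rle_trans; [apply Rmin_r|apply Rmin_r]).
          exists (dinterval adj u v (t - d') (t + d')); repeat split.
          -- right; left; exists u, v, (t - d'), (t + d'); repeat split; auto; try lra; tauto.
          -- exists t; split; auto; lra.
          -- intros ry rq' _ [t' [-> Ht']] Hp. exists t'; split; [eapply Hall; eauto|].
             apply Rabs_def1; lra. }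
        destruct (classic (fin_between adj cls (cls u) (cls v))) as [F|F].
        -- assert (Hq : rq = QInner (QCopy u v) t) by (eapply phi_copy; eauto).
           split; [intros; congruence|].
           intros e t' d Hq' Hd. rewrite Hq in Hq'. injection Hq' as <- <-.
           apply Hgen; auto. intros; eapply phi_copy; eauto.
        -- assert (Hq : rq = QInner (QQuot (cls u) (cls v)) t) by
             (eapply phi_diff; eauto; reflexivity).
           split; [intros; congruence|].
           intros e t' d Hq' Hd. rewrite Hq in Hq'. injection Hq' as <- <-.
           apply Hgen; auto. intros; eapply phi_diff; eauto; reflexivity.
    +
      destruct (end_class h) as [k2 Hk2].
      set (X := u :: X0).
      assert (Hsub : forall z, In z X0 -> In z X) by (intros; right; auto).
      assert (HB : forall d, 0 < d -> basicRaw adj (nbhdVE adj X u h t d)).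
      { intros d Hd. right; right; right; right; left.
        exists X, u, h, t, d; repeat split; auto; try lra; try tauto. left; auto. }
      assert (HIn : forall d, 0 < d -> nbhdVE adj X u h t d (PInner adj (NV adj u) (NE adj h) t)).
      { intros d Hd. exists (NE adj h), t; repeat split; auto using same_comp_refl, Rabs_self. }
      destruct (classic (cls u = k2)) as [E|E].
      * assert (Hq : rq = QNode k2) by (eapply phi_same; eauto).
        subst rq. split; [|intros; discriminate].
        intros k eps Hq Heps. injection Hq as <-.
        exists (nbhdVE adj X u h t 1); split; [apply HB; lra | split; [apply HIn; lra|]].
        intros ry rq _ [b [t' [-> [Hb _]]]] Hp. left.
        eapply phi_same; eauto. eapply node_in_class; eauto.
      * assert (Hnf := notfin_VE u h k2 He Hk2 E).
        assert (Hq : rq = QInner (QQuot (cls u) k2) t) by (eapply phi_diff; eauto; reflexivity).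
        split; [intros; congruence|].
        intros e t' d Hq' Hd. rewrite Hq in Hq'. injection Hq' as <- <-.
        exists (nbhdVE adj X u h t d); split; [apply HB; lra | split; [apply HIn; lra|]].
        intros ry rq' _ [b [t' [-> [Hb Hd']]]] Hp. exists t'; split; auto.
        eapply phi_diff; eauto; [reflexivity|]. eapply node_in_class; eauto.
    +
      destruct (end_class w) as [k1 Hk1].
      set (X := v :: X0).
      assert (Hsub : forall z, In z X0 -> In z X) by (intros; right; auto).
      assert (HB : forall d, 0 < d -> basicRaw adj (nbhdEV adj X w v t d)).
      { intros d Hd. right; right; right; right; right.
        exists X, w, v, t, d; repeat split; auto; try lra; try tauto. left; auto. }
      assert (HIn : forall d, 0 < d -> nbhdEV adj X w v t d (PInner adj (NE adj w) (NV adj v) t)).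
      { intros d Hd. exists (NE adj w), t; repeat split; auto using same_comp_refl, Rabs_self. }
      destruct (classic (k1 = cls v)) as [E|E].
      * assert (Hq : rq = QNode k1) by (eapply phi_same; eauto; simpl; congruence).
        subst rq. split; [|intros; discriminate].
        intros k eps Hq Heps. injection Hq as <-.
        exists (nbhdEV adj X w v t 1); split; [apply HB; lra | split; [apply HIn; lra|]].
        intros ry rq _ [a [t' [-> [Ha _]]]] Hp. left.
        eapply phi_same; eauto; [eapply node_in_class; eauto| simpl; congruence].
      * assert (Hnf := notfin_EV w v k1 He Hk1 E).
        assert (Hq : rq = QInner (QQuot k1 (cls v)) t) by (eapply phi_diff; eauto; reflexivity).
        split; [intros; congruence|].
        intros e t' d Hq' Hd. rewrite Hq in Hq'. injection Hq' as <- <-.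
        exists (nbhdEV adj X w v t d); split; [apply HB; lra | split; [apply HIn; lra|]].
        intros ry rq' _ [a [t' [-> [Ha Hd']]]] Hp. exists t'; split; auto.
        eapply phi_diff; eauto; [|reflexivity]. eapply node_in_class; eauto.
    +
      destruct (end_class w) as [k1 Hk1]. destruct (end_class h) as [k2 Hk2].
      assert (Hsub : forall z, In z X0 -> In z X0) by auto.
      destruct (classic (k1 = k2)) as [E|E].
      * subst k2.
        assert (Hq : rq = QNode k1) by (eapply phi_same; eauto).
        subst rq. split; [|intros; discriminate].
        intros k eps Hq Heps. injection Hq as <-.
        destruct (classic (same_comp adj X0 w h)) as [Hs|Hs].
        -- exists (Chat adj X0 w eps); repeat split.
           ++ right; right; left; exists X0, w, eps; split; auto; tauto.
           ++ right; exists (NE adj w), (NE adj h), t; split; auto. left; split; simpl.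
              apply same_comp_refl. intro z; specialize (Hs z); tauto.
           ++ intros ry rq _ HN Hp. eapply (Chat_maps w k1 eps Hk1); eauto.
        -- exists (nbhdEE adj X0 w h t 1); repeat split.
           ++ right; right; right; left. exists X0, w, h, t, 1; split; [exact He|]; repeat split; auto; try lra; try exact Hs; tauto.
           ++ exists (NE adj w), (NE adj h), t; repeat split; auto using same_comp_refl, Rabs_self, Rlt_0_1.
           ++ intros ry rq _ [a [b [t' [-> [Ha [Hb _]]]]]] Hp. left.
              eapply phi_same; [eauto| eapply (node_in_class X0 w k1 a); eauto | eapply (node_in_class X0 h k1 b); eauto].
      * assert (Hnf := notfin_EE w h k1 k2 He Hk1 Hk2 E).
        assert (Hq : rq = QInner (QQuot k1 k2) t) by (eapply phi_diff; eauto).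
        split; [intros; congruence|].
        intros e t' d Hq' Hd. rewrite Hq in Hq'. injection Hq' as <- <-.
        exists (nbhdEE adj X0 w h t d); repeat split.
        -- right; right; right; left. exists X0, w, h, t, d; split; [exact He|]; repeat split; auto; try lra; try tauto.
           eapply sep_diff; eauto.
        -- exists (NE adj w), (NE adj h), t; repeat split; auto using same_comp_refl, Rabs_self.
        -- intros ry rq' _ [a [b [t' [-> [Ha [Hb Hd']]]]]] Hp. exists t'; split; auto.
           eapply phi_diff; [eauto| eapply (node_in_class X0 w k1 a); eauto | eapply (node_in_class X0 h k2 b); eauto | auto | auto].
Qed.


Lemma phi_exists rp : validPt adj rp -> exists rq, validQ adj cls rq /\ phi_rel adj cls rp rq.
Proof.
  intros Hv. destruct rp as [n|a b t].
  - destruct (node_class_ex n) as [k Hk]. exists (QNode k); split; [exact I|].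
    exists k; auto.
  - destruct Hv as [He Ht].
    destruct (classic (exists u v, a = NV adj u /\ b = NV adj v)) as [[u [v [-> ->]]]|Hnv].
    + simpl in He. destruct (classic (cls u = cls v)) as [E|E].
      * exists (QNode (cls u)); split; [exact I|]. left; exists u, v; repeat split; auto.
      * destruct (classic (fin_between adj cls (cls u) (cls v))) as [F|F].
        -- exists (QInner (QCopy u v) t); split; [simpl; tauto|].
           left; exists u, v; repeat split; auto.
        -- exists (QInner (QQuot (cls u) (cls v)) t); split; [simpl; tauto|].
           left; exists u, v; repeat split; auto.
    + assert (Hnv' : forall u v, ~ (a = NV adj u /\ b = NV adj v)) by
        (intros u v H; apply Hnv; eauto).
      destruct (node_class_ex a) as [ka Ha]. destruct (node_class_ex b) as [kb Hb].
      destruct (classic (ka = kb)) as [E|E].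
      * exists (QNode ka); split; [exact I|]. right; split; auto.
        exists ka, kb; repeat split; auto.
      * exists (QInner (QQuot ka kb) t); split.
        -- simpl; repeat split; try tauto. eapply notfin_gen; eauto.
        -- right; split; auto. exists ka, kb; repeat split; auto.
Qed.

End X0.

Lemma QL1 (S : @RawQ V K -> Prop) k : basicQRaw adj cls S -> S (QNode k) ->
  exists eps, 0 < eps /\ forall q, qstar cls k eps q -> S q.
Proof.
  intros [[k' [eps [He HS]]] | [e [lo [hi [_ [_ [_ [_ HS]]]]]]]] H; apply HS in H.
  - destruct H as [E|[e [t [E _]]]]; [|discriminate]. injection E as <-.
    exists eps; split; auto. intros; apply HS; auto.
  - destruct H as [t [E _]]; discriminate.
Qed.

Lemma QL2 (S : @RawQ V K -> Prop) e t : basicQRaw adj cls S -> S (QInner e t) ->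
  exists d, 0 < d /\ forall t', Rabs (t' - t) < d -> S (QInner e t').
Proof.
  intros [[k' [eps [He HS]]] | [e' [lo [hi [_ [_ [_ [_ HS]]]]]]]] H; apply HS in H.
  - destruct H as [E|[e'' [t'' [E H]]]]; [discriminate|]. injection E as <- <-.
    destruct H as [[Ht Hlt]|[Hh Hlt]].
    + exists (eps - t); split; [lra|]. intros t' Ht'. apply Rabs_def2 in Ht'.
      apply HS; right; exists e, t'; split; auto; left; split; auto; lra.
    + exists (t - (1 - eps)); split; [lra|]. intros t' Ht'. apply Rabs_def2 in Ht'.
      apply HS; right; exists e, t'; split; auto; right; split; auto; lra.
  - destruct H as [t'' [E Hr]]. injection E as <- <-.
    exists (Rmin (t - lo) (hi - t)); split; [apply Rmin_pos; lra|].
    intros t' Ht'. apply Rabs_def2 in Ht'.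
    pose proof (Rmin_l (t - lo) (hi - t)). pose proof (Rmin_r (t - lo) (hi - t)).
    apply HS; exists t'; split; auto; lra.
Qed.

Lemma perS X0 (HX0 : goodX X0) (f : DPt adj -> QPt adj cls) (Hf : is_phi adj cls f) p S :
  basicQ adj cls S -> S (f p) ->
  exists N, basicD adj N /\ N p /\ forall y, N y -> S (f y).
Proof.
  intros [S0 [HS0 HSe]] Hp. apply HSe in Hp.
  pose proof (locRaw X0 HX0 _ _ (proj2_sig p) (Hf p)) as [L1 L2].
  remember (proj1_sig (f p)) as rq eqn:Ef. destruct rq as [k|e t].
  - destruct (QL1 S0 k HS0 Hp) as [eps [He Hs]].
    destruct (L1 k eps eq_refl He) as [N0 [HB [HN Hm]]].
    exists (fun y => N0 (proj1_sig y)); repeat split; auto.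
    + exists N0; split; auto; tauto.
    + intros y Hy. apply HSe, Hs. eapply Hm; eauto. apply (proj2_sig y).
  - destruct (QL2 S0 e t HS0 Hp) as [d [Hd Hs]].
    destruct (L2 e t d eq_refl Hd) as [N0 [HB [HN Hm]]].
    exists (fun y => N0 (proj1_sig y)); repeat split; auto.
    + exists N0; split; auto; tauto.
    + intros y Hy. apply HSe. destruct (Hm _ _ (proj2_sig y) Hy (Hf y)) as [t' [-> Ht']].
      auto.
Qed.

End S.

Lemma combine {A B : Type} (BA : (A -> Prop) -> Prop) (f : A -> B) p (l : list (B -> Prop)) :
  (forall S, In S l -> exists N, BA N /\ N p /\ forall y, N y -> S (f y)) ->
  exists Nb, Forall BA Nb /\ Forall (fun N => N p) Nb /\
    forall y, Forall (fun N => N y) Nb -> Forall (fun S => S (f y)) l.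
Proof.
  induction l as [|S l IH]; intros H.
  - exists []; repeat split; auto.
  - destruct (H S (or_introl eq_refl)) as [N [HN1 [HN2 HN3]]].
    destruct IH as [Nb [H1 [H2 H3]]]. { intros; apply H; right; auto. }
    exists (N :: Nb); repeat split; auto.
    intros y Hy. inversion Hy; subst. constructor; auto.
Qed.

Theorem lemma4p2 (V : Type) (adj : V -> V -> Prop) (K : Type) (cls : V -> K)
  (Hloop : forall v, ~ adj v v)
  (Hadm : admissible adj cls) :
  (exists f : DPt adj -> QPt adj cls, is_phi adj cls f) /\
  (forall f : DPt adj -> QPt adj cls, is_phi adj cls f ->
     continuous_wrt (basicD adj) (basicQ adj cls) f).
Proof.
  destruct (X0_exists adj cls Hadm) as [X0 HX0]. split.
  - assert (H : forall p : DPt adj, exists q : QPt adj cls,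
       phi_rel adj cls (proj1_sig p) (proj1_sig q)).
    { intros p. destruct (phi_exists adj cls X0 HX0 _ (proj2_sig p)) as [rq [Hv Hr]].
      exists (exist _ rq Hv); exact Hr. }
    exists (fun p => proj1_sig (constructive_indefinite_description _ (H p))).
    intros p. exact (proj2_sig (constructive_indefinite_description _ (H p))).
  - intros f Hf U HU p HUp.
    destruct (HU (f p) HUp) as [l [Hl1 [Hl2 Hl3]]].
    destruct (combine (basicD adj) f p l) as [Nb [H1 [H2 H3]]].
    { intros S HS. rewrite Forall_forall in Hl1, Hl2.
      apply (perS adj cls X0 HX0 f Hf p S); [apply Hl1|apply Hl2]; exact HS. }
    exists Nb; repeat split; auto.
Qed.
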